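(* For every positive integer $n$: (a) $\displaystyle nN^p(n)=\sum_{k=1}^{n-1}N^p(k)\sigma(n-k)+\sum_{t=1}^{n}t\,\tau(t)\,p(n-t)$; (b) $\displaystyle nN^q(n)=\sum_{k=1}^{n-1}N^q(k)\sigma^s(n-k)+\sum_{t=1}^{n}t\,\tau^s(t)\,q(n-t)$; (c) $\displaystyle nN^p_{bin}(n)=\sum_{k=1}^{n-1}N^p_{bin}(k)\big(2^{\vartheta_2(n-k)+1}-1\big)+\sum_{t=1}^{n}t\big(\vartheta_2(t)+1\big)b(n-t)$.
   Context: $N^p(n)$ (resp. $N^q(n)$) is the total number of parts, summed over all partitions (resp. partitions into distinct parts) of $n$; $p(m)$, $q(m)$ are the numbers of partitions and of partitions into distinct parts of $m$, with $p(0)=q(0)=1$. $\tau(m)$ is the number of positive divisors of $m$, $\sigma(m)$ their sum, $\tau^s(m)=\sum_{d\mid m}(-1)^{m/d-1}$, $\sigma^s(m)=\sum_{d\mid m}(-1)^{m/d-1}d$. A binary partition is a partition whose parts are powers of $2$ (including $1$); $b(m)$ is the number of binary partitions of $m$ with $b(0)=1$, and $N^p_{bin}(m)$ is the total number of parts over all binary partitions of $m$. $\vartheta_2$ is the $2$-adic valuation. *)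

(* Defs.v *)
From mathcomp Require Import all_boot all_order all_algebra.
Set Implicit Arguments. Unset Strict Implicit. Unset Printing Implicit Defensive.
Import GRing.Theory Num.Theory.

(* A partition of n is encoded by its multiplicity function:
   m i = number of parts equal to i.+1  (parts lie in 1..n, each
   multiplicity is at most n).  The sum of parts is \sum_i (i+1) m_i. *)
Definition mult_fun (n : nat) := {ffun 'I_n -> 'I_n.+1}.

Definition part_sum n (m : mult_fun n) : nat := \sum_(i < n) i.+1 * m i.
Definition num_parts n (m : mult_fun n) : nat := \sum_(i < n) m i.

Definition is_partition n (m : mult_fun n) : bool := part_sum m == n.
Definition is_dpartition n (m : mult_fun n) : bool :=
  is_partition m && [forall i, m i <= 1].
Definition is_pow2 (k : nat) : bool := [exists e : 'I_k.+1, k == 2 ^ e].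
Definition is_bpartition n (m : mult_fun n) : bool :=
  is_partition m && [forall i : 'I_n, (nat_of_ord (m i) != 0) ==> is_pow2 i.+1].

Definition ppart (n : nat) : nat := #|[pred m : mult_fun n | is_partition m]|.
Definition qpart (n : nat) : nat := #|[pred m : mult_fun n | is_dpartition m]|.
Definition bpart (n : nat) : nat := #|[pred m : mult_fun n | is_bpartition m]|.

Definition Np (n : nat) : nat := \sum_(m : mult_fun n | is_partition m) num_parts m.
Definition Nq (n : nat) : nat := \sum_(m : mult_fun n | is_dpartition m) num_parts m.
Definition Nbin (n : nat) : nat := \sum_(m : mult_fun n | is_bpartition m) num_parts m.

Definition tau (m : nat) : nat := size (divisors m).
Definition sigma (m : nat) : nat := \sum_(d <- divisors m) d.
Definition tau_s (m : nat) : int := (\sum_(d <- divisors m) (-1) ^+ (m %/ d).-1)%R.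
Definition sigma_s (m : nat) : int :=
  (\sum_(d <- divisors m) (-1) ^+ (m %/ d).-1 * d%:Z)%R.

Definition v2 (m : nat) : nat := logn 2 m.

(* Main.v *)
Require Import Defs.
From mathcomp Require Import all_boot all_order all_algebra zify ring.
Import GRing.Theory Num.Theory.
Set Implicit Arguments. Unset Strict Implicit. Unset Printing Implicit Defensive.

Definition Wt (w : nat -> nat -> int) n (m : mult_fun n) : int :=
  (\prod_(b < n) w b.+1 (m b))%R.
Definition Cg w n k : int := (\sum_(m : mult_fun n | part_sum m == k) Wt w m)%R.
Definition Ng w n k : int :=
  (\sum_(m : mult_fun n | part_sum m == k) Wt w m * (num_parts m)%:Z)%R.

Definition upd n (m : mult_fun n) (a : 'I_n) (v : nat) : mult_fun n :=
  [ffun b => if b == a then inord v else m b].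

Lemma upd_val n (m : mult_fun n) a v b : v <= n ->
  (upd m a v b : nat) = if b == a then v else m b.
Proof. by move=> hv; rewrite ffunE; case: eqP => // _; rewrite inordK. Qed.

Lemma sum_upd n (m : mult_fun n) a v (F : 'I_n -> nat -> nat) : v <= n ->
  \sum_b F b (upd m a v b) + F a (m a) = \sum_b F b (m b) + F a v.
Proof.
move=> hv; rewrite (bigD1 a) //= [in RHS](bigD1 a) //= upd_val // eqxx.
rewrite (eq_bigr (fun b => F b (m b))); first lia.
by move=> b /negbTE hb; rewrite upd_val // hb.
Qed.

Lemma prod_upd w n (m : mult_fun n) a v : v <= n ->
  (Wt w (upd m a v) * w a.+1 (m a) = Wt w m * w a.+1 v)%R.
Proof.
move=> hv; rewrite /Wt (bigD1 a) //= [in RHS](bigD1 a) //= upd_val // eqxx.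
rewrite (eq_bigr (fun b : 'I_n => w b.+1 (m b))); first ring.
by move=> b /negbTE hb; rewrite upd_val // hb.
Qed.

Lemma part_sum_ge n (m : mult_fun n) (a : 'I_n) : a.+1 * m a <= part_sum m.
Proof. by rewrite /part_sum (bigD1 a) //= leq_addr. Qed.

Lemma part_sum_upd n (m : mult_fun n) (a : 'I_n) v : v <= n ->
  part_sum (upd m a v) + a.+1 * m a = part_sum m + a.+1 * v.
Proof. exact: (sum_upd m a (fun b x => b.+1 * x)). Qed.

Lemma num_parts_upd n (m : mult_fun n) (a : 'I_n) v : v <= n ->
  num_parts (upd m a v) + m a = num_parts m + v.
Proof. exact: (sum_upd m a (fun b x => x)). Qed.

Lemma Wt_split w n (m : mult_fun n) (a : 'I_n) :
  Wt w m = (w a.+1 (m a) * \prod_(b | b != a) w b.+1 (m b))%R.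
Proof. by rewrite /Wt (bigD1 a). Qed.

Lemma Wt_upd w n (m : mult_fun n) (a : 'I_n) v : v <= n ->
  Wt w (upd m a v) = (w a.+1 v * \prod_(b | b != a) w b.+1 (m b))%R.
Proof.
move=> hv; rewrite (Wt_split _ _ a) upd_val // eqxx; congr (_ * _)%R.
by apply: eq_bigr => b /negbTE hb; rewrite upd_val // hb.
Qed.

Lemma sum_range (F : nat -> int) n k : k <= n ->
  (\sum_(1 <= i < n.+1 | (i <= k)%N) F i = \sum_(1 <= i < k.+1) F i)%R.
Proof.
move=> hk; rewrite (big_cat_nat _ (n := k.+1)) //= ?ltnS //.
rewrite [X in (_ + X)%R]big1_seq ?addr0; last first.
  move=> i /andP[hi]; rewrite mem_index_iota => /andP[h1 _]; exfalso; lia.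
rewrite big_nat_cond [RHS]big_nat_cond; apply: eq_bigl => i /=.
by rewrite andbT; case: (0 < i) => /=; rewrite ?ltnS ?andbb.
Qed.

Lemma stepA (w c : nat -> nat -> int)
  (Hwc : forall d j, 0 < d -> (j%:Z * w d j = \sum_(1 <= i < j.+1) c d i * w d (j - i)%N)%R)
  n (a : 'I_n) (m : mult_fun n) :
  ((m a)%:Z * Wt w m
   = \sum_(1 <= i < n.+1 | (i <= m a)%N) c a.+1 i * Wt w (upd m a (m a - i)%N))%R.
Proof.
have ha : m a <= n by rewrite -ltnS.
rewrite sum_range // (Wt_split _ _ a) mulrA Hwc // big_distrl /=.
apply: eq_big_nat => i _; rewrite Wt_upd ?mulrA //.
exact: leq_trans (leq_subr _ _) ha.
Qed.

Lemma roundtrip n (m : mult_fun n) (a : 'I_n) i : m a + i <= n ->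
  upd (upd m a (m a + i)) a ((upd m a (m a + i) a) - i) = m.
Proof.
move=> h; have e1 : (upd m a (m a + i) a : nat) = m a + i by rewrite upd_val ?eqxx.
apply/ffunP => b; apply: val_inj => /=; rewrite e1 upd_val; last lia.
case: eqP => [->|/eqP/negbTE nb]; first lia.
by rewrite upd_val // nb.
Qed.

Lemma roundtrip2 n (m : mult_fun n) (a : 'I_n) i : i <= m a ->
  upd (upd m a (m a - i)) a ((upd m a (m a - i) a) + i) = m.
Proof.
move=> h; have hma : m a <= n by rewrite -ltnS.
have e1 : (upd m a (m a - i) a : nat) = m a - i by rewrite upd_val ?eqxx //; lia.
apply/ffunP => b; apply: val_inj => /=; rewrite e1 upd_val; last lia.
case: eqP => [->|/eqP/negbTE nb]; first lia.
by rewrite upd_val ?nb //; lia.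
Qed.

Lemma stepB w n (a : 'I_n) i : 0 < i ->
 (\sum_(m : mult_fun n | (part_sum m == n) && (i <= m a)%N)
     Wt w (upd m a (m a - i)%N) * (num_parts m)%:Z
 = if (a.+1 * i <= n)%N then Ng w n (n - a.+1 * i)%N + i%:Z * Cg w n (n - a.+1 * i)%N
   else 0)%R.
Proof.
move=> i0; case: ifP => hai; last first.
  apply: big1 => m /andP[/eqP hs hi]; exfalso.
  have h2 : a.+1 * i <= a.+1 * m a by rewrite leq_mul2l hi orbT.
  have := leq_trans h2 (part_sum_ge m a); rewrite hs => h.
  by rewrite h in hai.
rewrite (reindex_onto (fun m' => upd m' a (m' a + i)) (fun m => upd m a (m a - i))); last first.
  by move=> m /andP[_ hi]; apply: roundtrip2.
rewrite /Ng /Cg big_distrr -big_split /=; apply: eq_big => m'.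
  have hps : m' a + i <= n -> part_sum (upd m' a (m' a + i)) = part_sum m' + a.+1 * i.
    move=> h; have := part_sum_upd m' a h; rewrite mulnDr; lia.
  apply/idP/idP.
    move=> /andP[/andP[/eqP hs hi] /eqP he].
    have hx : (upd m' a (m' a + i) a : nat) <= n by rewrite -ltnS.
    have hm : (m' a : nat) = upd m' a (m' a + i) a - i by rewrite -{1}he upd_val ?eqxx //; lia.
    have hle : m' a + i <= n by lia.
    move: hs; rewrite hps //; lia.
  move=> /eqP hs.
  have h1 := part_sum_ge m' a.
  have h2 : m' a <= a.+1 * m' a by rewrite leq_pmull.
  have h3 : i <= a.+1 * i by rewrite leq_pmull.
  have hle : m' a + i <= n by lia.
  rewrite hps // roundtrip // eqxx andbT upd_val ?eqxx //.
  apply/andP; split; [apply/eqP; lia | lia].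
move=> /andP[/andP[/eqP hs hi] /eqP he].
have hx : (upd m' a (m' a + i) a : nat) <= n by rewrite -ltnS.
have hm : (m' a : nat) = upd m' a (m' a + i) a - i by rewrite -{1}he upd_val ?eqxx //; lia.
have hle : m' a + i <= n by lia.
rewrite he.
have := num_parts_upd m' a hle => hnp.
have -> : num_parts (upd m' a (m' a + i)) = (num_parts m' + i)%N by lia.
rewrite PoszD; ring.
Qed.

Definition fn k (m : mult_fun k) (x : nat) : nat :=
  match (insub x : option 'I_k) with Some o => nat_of_ord (m o) | None => 0 end.

Definition conv k n (m : mult_fun k) : mult_fun n := [ffun b : 'I_n => inord (fn m b)].

Lemma fn_ord k (m : mult_fun k) (b : 'I_k) : fn m b = m b.
Proof. by rewrite /fn valK. Qed.

Lemma fn_le k (m : mult_fun k) x : fn m x <= k.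
Proof. rewrite /fn; case: insubP => [o _ _|_ //]; by rewrite -ltnS. Qed.

Lemma fn_out k (m : mult_fun k) x : k <= x -> fn m x = 0.
Proof. by move=> h; rewrite /fn insubF // ltnNge h. Qed.

Lemma fn_conv k n (m : mult_fun k) x :
  (forall y, fn m y <= n) -> (forall y, n <= y -> fn m y = 0) ->
  fn (conv n m) x = fn m x.
Proof.
move=> h1 h2; rewrite {1}/fn; case: insubP => [o _ <-|hx].
  by rewrite ffunE inordK // ltnS h1.
by rewrite h2 // leqNgt.
Qed.

Lemma big_fn (R : Type) (idx : R) (op : Monoid.law idx) k (m : mult_fun k)
  (F : nat -> nat -> R) :
  \big[op/idx]_(b < k) F b (m b) = \big[op/idx]_(0 <= x < k) F x (fn m x).
Proof. by rewrite big_mkord; apply: eq_bigr => b _; rewrite fn_ord. Qed.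

Lemma big_ext (R : Type) (idx : R) (op : Monoid.law idx) k n (g : nat -> nat)
  (F : nat -> nat -> R) : k <= n -> (forall x, k <= x -> g x = 0) ->
  (forall x, F x 0 = idx) ->
  \big[op/idx]_(0 <= x < n) F x (g x) = \big[op/idx]_(0 <= x < k) F x (g x).
Proof.
move=> hkn hg hF; rewrite (big_cat_nat _ (n := k)) //= [X in op _ X]big1_seq ?Monoid.mulm1 //.
by move=> x /andP[_]; rewrite mem_index_iota => /andP[hx _]; rewrite hg.
Qed.

Lemma big_conv (R : Type) (idx : R) (op : Monoid.law idx) k n (m : mult_fun k)
  (F : nat -> nat -> R) : k <= n -> (forall x, F x 0 = idx) ->
  \big[op/idx]_(b < n) F b (conv n m b) = \big[op/idx]_(b < k) F b (m b).
Proof.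
move=> hkn hF; rewrite !big_fn.
have h1 : forall y, fn m y <= n by move=> y; exact: leq_trans (fn_le m y) hkn.
have h2 : forall y, n <= y -> fn m y = 0 by move=> y hy; apply: fn_out; exact: leq_trans hkn hy.
rewrite (eq_big_nat _ _ (F2 := fun x => F x (fn m x))); last by move=> x _; rewrite fn_conv.
apply: big_ext => //; exact: fn_out.
Qed.

Lemma fn_partsum n k (M : mult_fun n) : part_sum M = k ->
  (forall y, fn M y <= k) /\ (forall y, k <= y -> fn M y = 0).
Proof.
move=> hs; split => y; rewrite /fn; case: insubP => [o _ ho|_ //].
- have := part_sum_ge M o; rewrite hs; apply: leq_trans; exact: leq_pmull.
- move=> hky; have := part_sum_ge M o; rewrite hs ho.
  case: (M o : nat) => // j; rewrite mulnS; lia.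
Qed.


Lemma sum_conv (G : forall n, mult_fun n -> int) n k : k <= n ->
  (forall m : mult_fun k, part_sum m = k -> G n (conv n m) = G k m) ->
  (\sum_(M : mult_fun n | part_sum M == k) G n M
   = \sum_(m : mult_fun k | part_sum m == k) G k m)%R.
Proof.
move=> hkn hG.
have ps_conv : forall m : mult_fun k, part_sum (conv n m) = part_sum m.
  move=> m; rewrite /part_sum (@big_conv _ _ _ _ _ m (fun b x => b.+1 * x)) //.
  by move=> x; rewrite muln0.

rewrite (reindex_onto (conv n) (conv k)); last first.
  move=> M /eqP hs; have [h1 h2] := fn_partsum hs.
  apply/ffunP => b; apply: val_inj => /=; rewrite -[in RHS]fn_ord -[LHS]fn_ord.
  rewrite fn_conv ?fn_conv //.
  - move=> y; rewrite fn_conv //; exact: leq_trans (h1 y) hkn.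
  - move=> y hy; rewrite fn_conv //; apply: h2; exact: leq_trans hkn hy.
apply: eq_big => m; last by move=> /andP[/eqP hs _]; rewrite hG // -ps_conv.
rewrite ps_conv; case: eqP => //= hs.
have hc : forall y, fn (conv n m) y = fn m y.
  move=> y; rewrite fn_conv //.
  - move=> z; exact: leq_trans (fn_le _ z) hkn.
  - move=> z hz; apply: fn_out; exact: leq_trans hkn hz.
apply/eqP/ffunP => b; apply: val_inj => /=; rewrite -[in RHS]fn_ord -[LHS]fn_ord.
rewrite fn_conv ?hc //; first by move=> y; rewrite hc fn_le.
by move=> y hy; rewrite hc fn_out.
Qed.

Lemma Ng_amb w n k : (forall d, w d 0 = 1%R) -> k <= n -> Ng w n k = Ng w k k.
Proof.
move=> hw hkn; apply: (sum_conv (G := fun n M => Wt w M * (num_parts M)%:Z)%R) => // m _.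
rewrite /Wt /num_parts (@big_conv _ _ _ _ _ m (fun b x => w b.+1 x)) //.
by rewrite (@big_conv _ _ _ _ _ m (fun b x => x)).
Qed.

Lemma Cg_amb w n k : (forall d, w d 0 = 1%R) -> k <= n -> Cg w n k = Cg w k k.
Proof.
move=> hw hkn; apply: (sum_conv (G := fun n M => Wt w M)) => // m _.
by rewrite /Wt (@big_conv _ _ _ _ _ m (fun b x => w b.+1 x)).
Qed.

Lemma divisors_sum (H : nat -> int) n t : 0 < t -> t <= n ->
  (\sum_(d <- divisors t) H d = \sum_(1 <= d < n.+1 | (d %| t)%N) H d)%R.
Proof.
move=> t0 htn; rewrite -[RHS]big_filter; apply: perm_big; apply: uniq_perm.
- exact: divisors_uniq.
- apply: filter_uniq; exact: iota_uniq.
move=> d; rewrite mem_filter mem_index_iota -dvdn_divisors //.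
case hd: (d %| t) => //=.
have := dvdn_leq t0 hd; have : 0 < d by apply: contraTT t0; rewrite -eqn0Ngt => /eqP d0; move: hd; rewrite d0 dvd0n => /eqP ->.
lia.
Qed.

Lemma mult_sum (H : nat -> int) n d : 0 < d ->
  (\sum_(1 <= i < n.+1 | (d * i <= n)%N) H (d * i)%N
   = \sum_(1 <= t < n.+1 | (d %| t)%N) H t)%R.
Proof.
move=> d0; rewrite -big_filter -[RHS]big_filter -(big_map (fun i => d * i) xpredT).
apply: perm_big; apply: uniq_perm.
- rewrite map_inj_uniq; first by apply: filter_uniq; exact: iota_uniq.
  by move=> x y /eqP; rewrite eqn_pmul2l // => /eqP.
- apply: filter_uniq; exact: iota_uniq.
move=> t; rewrite mem_filter mem_index_iota; apply/mapP/idP.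
  move=> [i]; rewrite mem_filter mem_index_iota => /andP[h1 /andP[h2 h3]] ->.
  rewrite dvdn_mulr //=.
  have : 1 <= d * i by rewrite muln_gt0 d0.
  lia.
move=> /andP[/dvdnP[i ->] /andP[h1 h2]]; exists i; last by rewrite mulnC.
rewrite mem_filter mem_index_iota mulnC.
have : 0 < i by move: h1; rewrite muln_gt0 => /andP[].
have : i <= i * d by rewrite leq_pmulr.
lia.
Qed.

Lemma regroup (F : nat -> nat -> int) n :
  (\sum_(a < n) \sum_(1 <= i < n.+1 | (a.+1 * i <= n)%N) F a.+1 i
   = \sum_(1 <= t < n.+1) \sum_(d <- divisors t) F d (t %/ d)%N)%R.
Proof.
have -> : (\sum_(1 <= t < n.+1) \sum_(d <- divisors t) F d (t %/ d)%N
   = \sum_(1 <= t < n.+1) \sum_(1 <= d < n.+1) (if (d %| t)%N then F d (t %/ d)%N else 0))%R.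
  apply: eq_big_nat => t /andP[t0 tn]; rewrite (divisors_sum _ (n := n)) //.
  by rewrite big_mkcond.
rewrite exchange_big /=.
have -> : (\sum_(1 <= d < n.+1) \sum_(1 <= t < n.+1) (if (d %| t)%N then F d (t %/ d)%N else 0)
   = \sum_(1 <= d < n.+1) \sum_(1 <= i < n.+1 | (d * i <= n)%N) F d i)%R.
  apply: eq_big_nat => d /andP[d0 dn]; rewrite -big_mkcond -mult_sum //.
  by apply: eq_bigr => i _; rewrite mulKn.
by rewrite big_add1 /= big_mkord.
Qed.

Lemma exch (I : finType) (P : pred I) (Q : I -> nat -> bool) (G : I -> nat -> int) r :
  (\sum_(m | P m) \sum_(i <- r | Q m i) G m i
   = \sum_(i <- r) \sum_(m | P m && Q m i) G m i)%R.
Proof.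
under eq_bigr do rewrite big_mkcond; rewrite exchange_big /=.
by apply: eq_bigr => i _; rewrite big_mkcondr.
Qed.

Lemma Posz_sum (I : Type) (r : seq I) (P : pred I) (F : I -> nat) :
  Posz (\sum_(i <- r | P i) F i) = (\sum_(i <- r | P i) (F i)%:Z)%R.
Proof. by rewrite -natz natr_sum; apply: eq_bigr => i _; rewrite natz. Qed.

Theorem general (w c : nat -> nat -> int) (Hw0 : forall d, w d 0 = 1%R)
  (Hwc : forall d j, 0 < d -> (j%:Z * w d j = \sum_(1 <= i < j.+1) c d i * w d (j - i)%N)%R)
  n :
  (n%:Z * Ng w n n
   = \sum_(1 <= t < n.+1) (\sum_(d <- divisors t) d%:Z * c d (t %/ d)%N) * Ng w (n - t)%N (n - t)%N
   + \sum_(1 <= t < n.+1) t%:Z * (\sum_(d <- divisors t) c d (t %/ d)%N) * Cg w (n - t)%N (n - t)%N)%R.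
Proof.
have step1 : (n%:Z * Ng w n n = \sum_(a < n) \sum_(m : mult_fun n | part_sum m == n)
      a.+1%:Z * ((m a)%:Z * Wt w m) * (num_parts m)%:Z)%R.
  rewrite /Ng big_distrr /= exchange_big /=; apply: eq_bigr => m /eqP hs.
  rewrite -{1}hs /part_sum Posz_sum big_distrl /=; apply: eq_bigr => a _.
  rewrite PoszM; ring.
rewrite step1.
have step2 : forall a : 'I_n, (\sum_(m : mult_fun n | part_sum m == n)
      a.+1%:Z * ((m a)%:Z * Wt w m) * (num_parts m)%:Z
   = \sum_(1 <= i < n.+1 | (a.+1 * i <= n)%N)
       (a.+1%:Z * c a.+1 i * (Ng w (n - a.+1 * i)%N (n - a.+1 * i)%N
            + i%:Z * Cg w (n - a.+1 * i)%N (n - a.+1 * i)%N)))%R.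
  move=> a.
  under eq_bigr do rewrite (stepA Hwc) big_distrr big_distrl /=.
  rewrite exch [RHS]big_mkcond /=; apply: eq_big_nat => i /andP[i0 _].
  rewrite (eq_bigr (fun m : mult_fun n => a.+1%:Z * c a.+1 i * (Wt w (upd m a (m a - i)%N) * (num_parts m)%:Z))%R); last by move=> m _; ring.
  rewrite -big_distrr /= stepB //.
  case: ifP => h; last by rewrite mulr0.
  by rewrite Ng_amb ?Cg_amb ?leq_subr.
under eq_bigr do rewrite step2.
rewrite (regroup (fun d i => d%:Z * c d i * (Ng w (n - d * i)%N (n - d * i)%N
            + i%:Z * Cg w (n - d * i)%N (n - d * i)%N))%R).
transitivity (\sum_(1 <= t < n.+1) ((\sum_(d <- divisors t) d%:Z * c d (t %/ d)%N) * Ng w (n - t)%N (n - t)%N + t%:Z * (\sum_(d <- divisors t) c d (t %/ d)%N) * Cg w (n - t)%N (n - t)%N))%R; last by rewrite big_split.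
apply: eq_big_nat => t /andP[t0 _].
rewrite big_distrl [X in (_ + X)%R]mulrAC [X in (_ + X)%R]big_distrr -big_split /=; apply: eq_big_seq => d.
rewrite -dvdn_divisors // => hd.
have e : (d * (t %/ d))%N = t by rewrite mulnC divnK.
rewrite e mulrDr; congr (_ + _)%R.
have -> : Posz t = (Posz d * Posz (t %/ d))%R by rewrite -PoszM e.
ring.
Qed.

Lemma rev_sum (A N : nat -> int) n : N 0 = 0%R ->
  (\sum_(1 <= t < n.+1) A t * N (n - t)%N = \sum_(1 <= k < n) N k * A (n - k)%N)%R.
Proof.
move=> N0; case: n => [|n]; first by rewrite !big_geq.
rewrite big_nat_recr //= subnn N0 mulr0 addr0 big_nat_rev /=.
apply: eq_big_nat => t /andP[t1 tn]; rewrite mulrC; congr (_ * _)%R; congr (_ _); lia.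
Qed.

Lemma Ng0 w : Ng w 0 0 = 0%R.
Proof. by apply: big1 => m _; rewrite /num_parts big_ord0 mulr0. Qed.

Lemma Wt_ind (w : nat -> nat -> int) n (m : mult_fun n) (p : pred 'I_n) :
  (forall b : 'I_n, w b.+1 (m b) = if p b then 1%R else 0%R) ->
  Wt w m = if [forall b, p b] then 1%R else 0%R.
Proof.
move=> hw; case: ifP => [/forallP h|/negbT/forallPn [b hb]].
  by apply: big1 => b _; rewrite hw h.
by rewrite /Wt (bigD1 b) //= hw (negbTE hb) mul0r.
Qed.

Lemma sum_ones j : (\sum_(1 <= i < j.+1) (1 : int) = j%:Z)%R.
Proof.
have := sum1_size (index_iota 1 j.+1); rewrite size_iota subSS subn0 => h.
by rewrite -[in RHS]h Posz_sum.
Qed.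

Lemma Hwc_a : forall d j, 0 < d ->
  (j%:Z * (fun _ _ => 1%R : int) d j
   = \sum_(1 <= i < j.+1) (fun _ _ => 1%R : int) d i * (fun _ _ => 1%R : int) d (j - i)%N)%R.
Proof. by move=> d j _ /=; rewrite mulr1; under eq_bigr do rewrite mulr1; rewrite sum_ones. Qed.

Definition wq (d j : nat) : int := if (j <= 1)%N then 1%R else 0%R.
Definition cq (d i : nat) : int := ((-1) ^+ i.-1)%R.

Lemma Hwc_b : forall d j, 0 < d ->
  (j%:Z * wq d j = \sum_(1 <= i < j.+1) cq d i * wq d (j - i)%N)%R.
Proof.
move=> d [|[|j]] _.
- by rewrite big_geq.
- by rewrite big_nat1 /wq /cq.
rewrite big_nat_recr // big_nat_recr //= big1_seq; last first.
  move=> i /andP[_]; rewrite mem_index_iota => /andP[_ hi].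
  by rewrite /wq ifN ?mulr0 //; lia.
rewrite /wq /cq subSS subnn subSn // subnn /=.
rewrite exprS; ring.
Qed.

Definition wb (d j : nat) : int := if (j == 0) || is_pow2 d then 1%R else 0%R.
Definition cb (d i : nat) : int := if is_pow2 d then 1%R else 0%R.

Lemma Hwc_c : forall d j, 0 < d ->
  (j%:Z * wb d j = \sum_(1 <= i < j.+1) cb d i * wb d (j - i)%N)%R.
Proof.
move=> d j _; rewrite /wb /cb; case: (is_pow2 d); rewrite ?orbT /=.
  by under eq_bigr do rewrite orbT mul1r; rewrite mulr1 sum_ones.
rewrite orbF big1 => [|i _]; [by case: j => //= j; rewrite mulr0 | exact: mul0r].
Qed.

Lemma is_pow2P d : reflect (exists e, d = 2 ^ e) (is_pow2 d).
Proof.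
apply: (iffP existsP) => [[e /eqP ->]|[e ->]]; first by exists e.
have he : e < (2 ^ e).+1 by apply: leq_trans (ltn_expl e (isT : 1 < 2)) _.
by exists (Ordinal he).
Qed.

Lemma pow2_perm t : 0 < t ->
  perm_eq [seq d <- divisors t | is_pow2 d] [seq 2 ^ e | e <- iota 0 (v2 t).+1].
Proof.
move=> t0; apply: uniq_perm.
- apply: filter_uniq; exact: divisors_uniq.
- rewrite map_inj_uniq ?iota_uniq //; exact: expnI.
move=> d; rewrite mem_filter -dvdn_divisors //; apply/andP/mapP.
  move=> [/is_pow2P [e ->]]; rewrite pfactor_dvdn // => he.
  by exists e => //; rewrite mem_iota add0n ltnS he.
move=> [e]; rewrite mem_iota add0n ltnS => /= he ->; split.
  by apply/is_pow2P; exists e.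
by rewrite pfactor_dvdn.
Qed.

Lemma geom k : (\sum_(e < k) 2 ^ e).+1 = 2 ^ k.
Proof.
elim: k => [|k IH]; first by rewrite big_ord0.
by rewrite big_ord_recr /= -addSn IH expnS; lia.
Qed.

Lemma sigma_b t : 0 < t ->
  (\sum_(d <- divisors t) d%:Z * cb d (t %/ d)%N)%R = Posz (2 ^ (v2 t).+1 - 1).
Proof.
move=> t0; rewrite /cb.
have -> : (\sum_(d <- divisors t) d%:Z * (if is_pow2 d then 1 else 0))%R
   = Posz (\sum_(d <- divisors t | is_pow2 d) d).
  rewrite Posz_sum [RHS]big_mkcond /=; apply: eq_bigr => d _.
  by case: (is_pow2 d); rewrite ?mulr1 ?mulr0.
rewrite -big_filter (perm_big _ (pow2_perm t0)) big_map -val_enum_ord big_map.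
by rewrite -[in RHS]geom subn1 /= enumT.
Qed.

Lemma tau_b t : 0 < t ->
  (\sum_(d <- divisors t) cb d (t %/ d)%N)%R = Posz (v2 t).+1.
Proof.
move=> t0; rewrite /cb.
have -> : (\sum_(d <- divisors t) (if is_pow2 d then 1 else 0 : int))%R
   = Posz (\sum_(d <- divisors t | is_pow2 d) 1).
  by rewrite Posz_sum [RHS]big_mkcond.
by rewrite -big_filter sum1_size (perm_size (pow2_perm t0)) size_map size_iota.
Qed.

Definition w1 (d j : nat) : int := 1%R.

Lemma Wt1 n (m : mult_fun n) : Wt w1 m = 1%R.
Proof. by apply: big1. Qed.

Lemma Ng_a n : Ng w1 n n = Posz (Np n).
Proof. by rewrite /Ng /Np Posz_sum; apply: eq_bigr => m _; rewrite Wt1 mul1r. Qed.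

Lemma Cg_a n : Cg w1 n n = Posz (ppart n).
Proof.
rewrite /Cg /ppart -sum1_card Posz_sum; apply: eq_big => // m _.
by rewrite Wt1.
Qed.

Lemma Ng_b n : Ng wq n n = Posz (Nq n).
Proof.
rewrite /Ng /Nq Posz_sum /is_dpartition /is_partition big_mkcondr /=.
apply: eq_bigr => m _; rewrite (@Wt_ind _ _ _ (fun b => m b <= 1)) //.
by case: ifP; rewrite ?mul1r ?mul0r.
Qed.

Lemma Cg_b n : Cg wq n n = Posz (qpart n).
Proof.
rewrite /Cg /qpart -sum1_card Posz_sum.
rewrite [RHS](eq_bigl (fun m : mult_fun n => (part_sum m == n) && [forall i, m i <= 1])); last by move=> m; rewrite inE.
rewrite [RHS]big_mkcondr /=; apply: eq_bigr => m _.
by rewrite (@Wt_ind _ _ _ (fun b => m b <= 1)).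
Qed.

Lemma Ng_c n : Ng wb n n = Posz (Nbin n).
Proof.
rewrite /Ng /Nbin Posz_sum /is_bpartition /is_partition big_mkcondr /=.
apply: eq_bigr => m _.
rewrite (@Wt_ind _ _ _ (fun b : 'I_n => (nat_of_ord (m b) != 0) ==> is_pow2 b.+1)).
  by case: ifP; rewrite ?mul1r ?mul0r.
by move=> b; rewrite /wb implybE negbK.
Qed.

Lemma Cg_c n : Cg wb n n = Posz (bpart n).
Proof.
rewrite /Cg /bpart -sum1_card Posz_sum.
rewrite [RHS](eq_bigl (fun m : mult_fun n => (part_sum m == n) &&
   [forall i : 'I_n, (nat_of_ord (m i) != 0) ==> is_pow2 i.+1])); last by move=> m; rewrite inE.
rewrite [RHS]big_mkcondr /=; apply: eq_bigr => m _.
rewrite (@Wt_ind _ _ _ (fun b : 'I_n => (nat_of_ord (m b) != 0) ==> is_pow2 b.+1)) //.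
by move=> b; rewrite /wb implybE negbK.
Qed.

Lemma w1_0 d : w1 d 0 = 1%R. Proof. by []. Qed.
Lemma wq_0 d : wq d 0 = 1%R. Proof. by []. Qed.
Lemma wb_0 d : wb d 0 = 1%R. Proof. by []. Qed.

Unset Implicit Arguments.

Theorem corollary9 (n : nat) : 0 < n ->
  [/\ n * Np n = \sum_(1 <= k < n) Np k * sigma (n - k)
                 + \sum_(1 <= t < n.+1) t * tau t * ppart (n - t),
      ((n%:Z * (Nq n)%:Z
        = \sum_(1 <= k < n) (Nq k)%:Z * sigma_s (n - k)
          + \sum_(1 <= t < n.+1) t%:Z * tau_s t * (qpart (n - t))%:Z)%R)
    & n * Nbin n = \sum_(1 <= k < n) Nbin k * (2 ^ (v2 (n - k)).+1 - 1)
                   + \sum_(1 <= t < n.+1) t * (v2 t).+1 * bpart (n - t)].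
Proof.
move=> n0; split.
- apply/eqP; rewrite -eqz_nat; apply/eqP.
  rewrite PoszD !Posz_sum PoszM -Ng_a (general w1_0 Hwc_a).
  congr (_ + _)%R.
    rewrite (@rev_sum _ (fun k => Ng w1 k k) n (Ng0 w1)).
    apply: eq_big_nat => k hk; rewrite Ng_a PoszM /sigma Posz_sum.
    by congr (_ * _)%R; apply: eq_bigr => d _; rewrite mulr1.
  apply: eq_big_nat => t ht; rewrite Cg_a !PoszM /tau -sum1_size Posz_sum.
  by congr (_ * _ * _)%R; apply: eq_bigr.
- rewrite -Ng_b (general wq_0 Hwc_b).
  congr (_ + _)%R.
    rewrite (@rev_sum _ (fun k => Ng wq k k) n (Ng0 wq)).
    apply: eq_big_nat => k hk; rewrite Ng_b /sigma_s.
    by congr (_ * _)%R; apply: eq_bigr => d _; rewrite mulrC.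
  by apply: eq_big_nat => t ht; rewrite Cg_b.
- apply/eqP; rewrite -eqz_nat; apply/eqP.
  rewrite PoszD !Posz_sum PoszM -Ng_c (general wb_0 Hwc_c).
  congr (_ + _)%R.
    rewrite (@rev_sum _ (fun k => Ng wb k k) n (Ng0 wb)).
    apply: eq_big_nat => k /andP[k1 kn]; rewrite Ng_c PoszM sigma_b //.
    lia.
  apply: eq_big_nat => t /andP[t1 _]; rewrite Cg_c !PoszM tau_b //.
Qed.
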